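(* For all $x,y\in\{5,6,7,8\}$ (not necessarily distinct) there is a snark $G$ with a Hist $T$ such that $oc(G,T)$ is the multiset $\{x,y\}$.
   Context: A snark is a cyclically $4$-edge-connected cubic (3-regular) graph of girth at least $5$ that admits no proper $3$-edge-colouring. A Hist of a cubic graph $G$ is a spanning tree $T$ of $G$ with no vertex of degree two (so every vertex of $T$ has degree $1$ or $3$). Given a Hist $T$ of a cubic graph $G$, the edges of $G$ not in $T$ form vertex-disjoint cycles whose vertices are exactly the leaves of $T$; these are the outer cycles of $(G,T)$. If $C_1,\dots,C_k$ are all outer cycles, $oc(G,T)$ denotes the multiset $\{|V(C_1)|,\dots,|V(C_k)|\}$ of their lengths. *)

(* Defs.v *)
From mathcomp Require Import all_boot.
Set Implicit Arguments. Unset Strict Implicit. Unset Printing Implicit Defensive.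

Section Graphs.
Variable V : finType.

Definition simple_graph (e : rel V) : Prop :=
  symmetric e /\ irreflexive e.

Definition nbhd (e : rel V) (v : V) : {set V} := [set u | e v u].
Definition deg (e : rel V) (v : V) : nat := #|nbhd e v|.

Definition cubic (e : rel V) : Prop := forall v, deg e v = 3.

Definition is_cycle (e : rel V) (c : seq V) : Prop :=
  [/\ uniq c, 3 <= size c & cycle e c].

Definition has_cycle_in (e : rel V) (S : {set V}) : Prop :=
  exists c, is_cycle e c /\ {subset c <= S}.

Definition girth_ge5 (e : rel V) : Prop :=
  forall c, is_cycle e c -> 5 <= size c.

Definition cut (e : rel V) (S : {set V}) : {set V * V} :=
  [set p | [&& p.1 \in S, p.2 \notin S & e p.1 p.2]].

Definition cyc4_edge_connected (e : rel V) : Prop :=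
  forall S : {set V}, has_cycle_in e S -> has_cycle_in e (~: S) ->
    4 <= #|cut e S|.

Definition edge3colouring (e : rel V) (col : V -> V -> 'I_3) : Prop :=
  (forall u v, e u v -> col u v = col v u) /\
  (forall v u w, e v u -> e v w -> u != w -> col v u != col v w).

Definition three_edge_colourable (e : rel V) : Prop :=
  exists col, edge3colouring e col.

Definition snark (e : rel V) : Prop :=
  [/\ simple_graph e, cubic e, cyc4_edge_connected e, girth_ge5 e
    & ~ three_edge_colourable e].

Definition spanning_tree (e t : rel V) : Prop :=
  [/\ subrel t e, symmetric t, (forall u v, connect t u v)
    & forall c, ~ is_cycle t c].

(* Hist: spanning tree without vertices of degree 2 (all degrees 1 or 3) *)
Definition hist (e t : rel V) : Prop :=
  spanning_tree e t /\ forall v, (deg t v == 1) || (deg t v == 3).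

Definition cotree (e t : rel V) : rel V := fun u v => e u v && ~~ t u v.

Definition leaves (t : rel V) : {set V} := [set v | deg t v == 1].

(* outer cycles = connected components of the cotree graph on the leaves
   of T, each given by its vertex set *)
Definition outer_cycles (e t : rel V) : {set {set V}} :=
  [set [set w | connect (cotree e t) v w] | v in leaves t].

(* oc(G,T): multiset (as a sequence up to permutation) of outer cycle lengths *)
Definition oc (e t : rel V) : seq nat :=
  map (fun C : {set V} => #|C|) (enum (outer_cycles e t)).

End Graphs.

(* Main.v *)
Require Import Defs.
From mathcomp Require Import all_boot.
Set Implicit Arguments. Unset Strict Implicit. Unset Printing Implicit Defensive.

Section Gen.
Variable n' : nat.
Local Notation N := n'.+1.
Local Notation V := 'I_N.
Variable tbl : seq (seq nat).
Definition nb (u : nat) : seq nat := nth [::] tbl u.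
Definition E : rel V := fun u v => (nat_of_ord v) \in nb u.

Definition allv (P : nat -> bool) := all P (iota 0 N).
Lemma allvP P : allv P -> forall u : V, P u.
Proof. by move=> /allP h u; apply: h; rewrite mem_iota /= add0n ltn_ord. Qed.

Lemma card_list (s : seq nat) : uniq s -> all (fun x => x < N) s ->
  #|[set u : V | val u \in s]| = size s.
Proof.
move=> us /allP als; rewrite cardE -(size_map val); apply: perm_size.
apply: uniq_perm => //; first by rewrite (map_inj_uniq val_inj) enum_uniq.
move=> x; apply/mapP/idP => [[u]|xs]; first by rewrite mem_enum inE => h ->.
by exists (Ordinal (als x xs)); rewrite ?mem_enum ?inE.
Qed.

Definition chk_sym := allv (fun u => all (fun v => (v < N) && (u \in nb v)) (nb u)).
Definition chk_irr := allv (fun u => u \notin nb u).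
Definition chk_deg := allv (fun u => uniq (nb u) && (size (nb u) == 3)).

Lemma E_sym : chk_sym -> symmetric E.
Proof.
move=> /allvP h u v; rewrite /E; apply/idP/idP => H.
  by have /allP /(_ _ H) /andP[] := h u.
by have /allP /(_ _ H) /andP[] := h v.
Qed.

Lemma E_lt : chk_sym -> forall (u : nat) v, u < N -> v \in nb u -> v < N.
Proof. by move=> /allvP h u v hu H; have /allP /(_ _ H) /andP[] := h (Ordinal hu). Qed.

Lemma simple_ok : chk_sym -> chk_irr -> simple_graph E.
Proof. by move=> s /allvP i; split; [exact: E_sym | move=> u; apply/negbTE/i]. Qed.

Lemma cubic_ok : chk_sym -> chk_deg -> cubic E.
Proof.
move=> s /allvP d v; rewrite /deg /nbhd.
have /andP[u3 /eqP <-] := d v; apply: card_list => //.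
by apply/allP => w; apply: E_lt.
Qed.

Definition chk_g := allv (fun a => all (fun b => all (fun c =>
  (~~ (uniq [:: a; b; c] && (a \in nb c))) &&
  all (fun d => ~~ (uniq [:: a; b; c; d] && (a \in nb d))) (nb c)) (nb b)) (nb a)).

Lemma girth_ok : chk_g -> girth_ge5 E.
Proof.
move=> /allvP g c [uc sc cyc].
have uv : uniq (map val c) by rewrite (map_inj_uniq val_inj).
case: c uc uv sc cyc => [|a [|b [|c [|d [|f s]]]]] //= uc uv _ cyc.
- have /and4P[ab bc ca _] := cyc.
  have /allP /(_ _ ab) /allP /(_ _ bc) /andP[H _] := g a.
  by exfalso; apply: (negP H); rewrite /E in ca; rewrite ca andbT; exact: uv.
- have /and5P[ab bc cd da _] := cyc.
  have /allP /(_ _ ab) /allP /(_ _ bc) /andP[_ /allP /(_ _ cd) H] := g a.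
  by exfalso; apply: (negP H); rewrite /E in da; rewrite da andbT; exact: uv.
Qed.

Definition crossL (inS outS : seq nat) : seq (nat * nat) :=
  undup (flatten [seq [seq (u, v) | v <- [seq v <- nb u | v \in outS]] | u <- inS]).

Fixpoint srch (todo inS outS : seq nat) : bool :=
  if 3 < size (crossL inS outS) then true else
  match todo with
  | [::] => if size inS <= 4 then true else size outS <= 4
  | v :: r => if srch r (v :: inS) outS then srch r inS (v :: outS) else false
  end.

Lemma cross_card (S : {set V}) inS outS : chk_sym ->
  all (fun x => x < N) inS ->
  (forall u : V, val u \in inS -> u \in S) ->
  (forall u : V, val u \in outS -> u \notin S) ->
  size (crossL inS outS) <= #|cut E S|.
Proof.
move=> cs /allP ain hin hout.
rewrite cardE -(size_map (fun p : V * V => (val p.1, val p.2))).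
apply: uniq_leq_size; first exact: undup_uniq.
move=> [a b]; rewrite mem_undup => /flattenP [l /mapP [u uin ->]] /mapP [v].
rewrite mem_filter => /andP [vout vnb] [-> ->].
have hu := ain u uin; have hv := E_lt cs hu vnb.
apply/mapP; exists (Ordinal hu, Ordinal hv) => //.
rewrite mem_enum inE /=; apply/and3P; split.
- exact: hin.
- exact: hout.
- by [].
Qed.

Lemma card_side (S : {set V}) (s : seq nat) :
  (forall u : V, u \in S -> val u \in s) -> #|S| <= size s.
Proof.
move=> h; rewrite cardE -(size_map val); apply: uniq_leq_size.
  by rewrite (map_inj_uniq val_inj) enum_uniq.
by move=> x /mapP [u]; rewrite mem_enum => /h ? ->.
Qed.

Lemma srch_sound todo : forall inS outS (S : {set V}), chk_sym ->
  all (fun x => x < N) (todo ++ inS ++ outS) ->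
  (forall u : V, val u \in inS -> u \in S) ->
  (forall u : V, val u \in outS -> u \notin S) ->
  (forall u : V, val u \in todo ++ inS ++ outS) ->
  srch todo inS outS -> 4 <= #|cut E S| \/ (#|S| <= 4 \/ #|~: S| <= 4).
Proof.
elim: todo => [|v r IH] inS outS S cs al hin hout cov /= /orP [cr|rest].
- left; apply: (leq_trans cr); apply: cross_card => //.
  by move: al; rewrite /= all_cat => /andP[].
- right; case/orP: rest => h; [left|right]; apply: leq_trans h.
    apply: card_side => u uS; move: (cov u); rewrite /= mem_cat => /orP [//|uo].
    by move: (hout u uo); rewrite uS.
  apply: card_side => u; rewrite inE => uS; move: (cov u); rewrite /= mem_cat => /orP [ui|//].
  by move: (hin u ui); rewrite (negbTE uS).
- left; apply: (leq_trans cr); apply: cross_card => //.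
  by move: al; rewrite /= !all_cat => /and4P[_ _ ? _].
- have hv : v < N by move: al => /= /andP[].
  case/andP: rest => r1 r2.
  have al' : all (fun x => x < N) r /\ all (fun x => x < N) (v :: inS) /\ all (fun x => x < N) outS /\ all (fun x => x < N) inS.
    by move: al; rewrite /= !all_cat => /and4P[-> -> -> ->].
  case: al' => a1 [a2 [a3 a4]].
  case vS: (Ordinal hv \in S).
  + apply: (IH (v :: inS) outS S cs) => //.
    * by rewrite !all_cat a1 a2 a3.
    * move=> u; rewrite inE => /orP [/eqP uv|uin]; last exact: hin.
      by have -> : u = Ordinal hv by apply: val_inj.
    * move=> u; move: (cov u); rewrite /= ?inE ?mem_cat ?inE ?mem_cat ?inE.
      by case: (val u == v); case: (val u \in r); case: (val u \in inS); case: (val u \in outS).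
  + apply: (IH inS (v :: outS) S cs) => //.
    * by rewrite !all_cat /= a1 a4 a3 hv.
    * move=> u; rewrite inE => /orP [/eqP uv|uin]; last exact: hout.
      have -> : u = Ordinal hv by apply: val_inj.
      by rewrite vS.
    * move=> u; move: (cov u); rewrite /= ?inE ?mem_cat ?inE ?mem_cat ?inE.
      by case: (val u == v); case: (val u \in r); case: (val u \in inS); case: (val u \in outS).
Qed.

Lemma cyc4_ok (ord : seq nat) : chk_sym -> girth_ge5 E ->
  all (fun x => x < N) ord -> (forall u : V, val u \in ord) ->
  srch ord [::] [::] -> cyc4_edge_connected E.
Proof.
move=> cs g al cov s S [c1 [cy1 sub1]] [c2 [cy2 sub2]].
have : 4 <= #|cut E S| \/ (#|S| <= 4 \/ #|~: S| <= 4).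
  by apply: (@srch_sound ord [::] [::] S) => //=; rewrite ?cats0.
move=> [//|[h|h]]; exfalso.
- have := g _ cy1; case: cy1 => u1 _ _.
  have : #|c1| <= #|S| by apply: subset_leq_card; apply/subsetP.
  by rewrite (card_uniqP u1) => a b; move: (leq_trans b (leq_trans a h)).
- have := g _ cy2; case: cy2 => u2 _ _.
  have : #|c2| <= #|~: S| by apply: subset_leq_card; apply/subsetP.
  by rewrite (card_uniqP u2) => a b; move: (leq_trans b (leq_trans a h)).
Qed.

Definition share (p q : nat * nat) :=
  [|| p.1 == q.1, p.1 == q.2, p.2 == q.1 | p.2 == q.2].

Fixpoint hasL (f : nat -> bool) (s : seq nat) : bool :=
  match s with [::] => false | x :: s' => if f x then true else hasL f s' end.
Lemma hasLE f s : hasL f s = has f s.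
Proof. by elim: s => //= x s ->. Qed.

Fixpoint csrch (todo : seq (nat * nat)) (done : seq (nat * nat * nat)) : bool :=
  match todo with
  | [::] => true
  | p :: r => hasL (fun c => if all (fun d => ~~ share p d.1 || (c != d.2)) done
                            then csrch r ((p, c) :: done) else false) [:: 0; 1; 2]
  end.

Definition chk_EL (EL : seq (nat * nat)) :=
  uniq EL && all (fun p => [&& p.1 < p.2, p.2 < N & p.2 \in nb p.1]) EL.

Lemma inord_eq (a b : nat) : a < N -> b < N -> (inord a == inord b :> V) = (a == b).
Proof.
move=> ha hb; apply/eqP/eqP => [h|->] //.
by rewrite -(inordK ha) -(inordK hb) h.
Qed.

Lemma col_sound EL col : chk_sym -> chk_EL EL -> edge3colouring E col -> csrch EL [::].
Proof.
move=> cs /andP [uEL /allP aEL] [c1 c2].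
pose colN (p : nat * nat) : nat := col (inord p.1) (inord p.2).
have Einord : forall a b : nat, a < N -> b \in nb a -> E (inord a) (inord b).
  move=> a b ha hb; have hbN := E_lt cs ha hb; by rewrite /E !inordK.
have key : forall p q, p \in EL -> q \in EL -> p != q -> share p q -> colN p != colN q.
  move=> [a b] [c d] /aEL /and3P [/= ab bN nab] /aEL /and3P [/= cd dN ncd] pq.
  have aN : a < N by apply: ltn_trans bN.
  have cN : c < N by apply: ltn_trans dN.
  have Eab := Einord _ _ aN nab; have Ecd := Einord _ _ cN ncd.
  have Eba : E (inord b) (inord a) by rewrite (E_sym cs (inord b)).
  have Edc : E (inord d) (inord c) by rewrite (E_sym cs (inord d)).

  rewrite /share /colN /= => /or4P [] /eqP e.
  - subst c; apply: c2 => //; rewrite inord_eq //; apply: contra pq => /eqP ->. done.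
  - subst d; rewrite (c1 _ _ Ecd); apply: c2 => //.

    by rewrite inord_eq //; apply/eqP => bc; subst c; move: (ltn_trans ab cd); rewrite ltnn.
  - subst c; rewrite (c1 _ _ Eab); apply: c2 => //.
    by rewrite inord_eq //; apply/eqP => ad; subst d; move: (ltn_trans ab cd); rewrite ltnn.
  - subst d; rewrite (c1 _ _ Eab) (c1 _ _ Ecd); apply: c2 => //.
    by rewrite inord_eq //; apply: contra pq => /eqP ->.
suff gen : forall todo done, uniq (todo ++ map fst done) ->
    {subset todo ++ map fst done <= EL} ->
    (forall d, d \in done -> d.2 = colN d.1) -> csrch todo done.
  by apply: gen; rewrite ?cats0 //.
elim=> [//|p r IH] done U S D.
change (hasL (fun c => if all (fun d => ~~ share p d.1 || (c != d.2)) done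
   then csrch r ((p, c) :: done) else false) [:: 0; 1; 2]).
rewrite hasLE; apply/hasP; exists (colN p).

  by have := ltn_ord (col (inord p.1) (inord p.2)); rewrite /colN; case: (nat_of_ord _) => [|[|[|]]].

apply/andP; split.
  apply/allP => d dd; rewrite (D _ dd) -implybE;
 apply/implyP => sh.
  apply: key => //.
  - by apply: S; rewrite inE eqxx.
  - by apply: S; rewrite mem_cat orbC; apply/orP; left; apply/mapP; exists d.
  - apply: contraTneq U => ->; rewrite /= mem_cat negb_and negbK; apply/orP; left.
    by apply/orP; right; apply/mapP; exists d.
apply: IH.
- rewrite /= -cat1s uniq_catCA; exact: U.

- move=> q; rewrite /= mem_cat inE => H; apply: S; rewrite inE mem_cat.
  by case/orP: H => [->|/orP [->|->]]; rewrite ?orbT.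
- by move=> d; rewrite inE => /orP [/eqP -> //|]; exact: D.
Qed.

Variables (ttbl : seq (seq nat)) (par dep : seq nat) (r : nat).
Definition tn (u : nat) : seq nat := nth [::] ttbl u.
Definition T : rel V := fun u v => (nat_of_ord v) \in tn u.
Definition pa (u : nat) : nat := nth 0 par u.
Definition dp (u : nat) : nat := nth 0 dep u.

Definition chk_t := allv (fun u => [&& uniq (tn u), (size (tn u) == 1) || (size (tn u) == 3) &
  all (fun v => [&& v < N, u \in tn v, v \in nb u &
     ((pa u == v) && (u != r) && (dp u == (dp v).+1)) ||
     ((pa v == u) && (v != r) && (dp v == (dp u).+1))]) (tn u)]).
Definition chk_t2 := (r < N) &&
  allv (fun u => (u == r) || [&& pa u < N, pa u \in tn u & dp u == (dp (pa u)).+1]).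

Section Tree.
Hypothesis ct : chk_t.
Hypothesis ct2 : chk_t2.

Lemma tP (u : nat) : u < N -> [&& uniq (tn u), (size (tn u) == 1) || (size (tn u) == 3) &
  all (fun v => [&& v < N, u \in tn v, v \in nb u &
     ((pa u == v) && (u != r) && (dp u == (dp v).+1)) ||
     ((pa v == u) && (v != r) && (dp v == (dp u).+1))]) (tn u)].
Proof. by move=> h; exact: (allvP ct (Ordinal h)). Qed.


Lemma T_sym : symmetric T.
Proof.
move=> u v; rewrite /T; apply/idP/idP => H.
  by have /and3P [_ _ /allP /(_ _ H) /and4P []] := tP (ltn_ord u).
by have /and3P [_ _ /allP /(_ _ H) /and4P []] := tP (ltn_ord v).
Qed.

Lemma T_sub : subrel T E.
Proof. by move=> u v H; have /and3P [_ _ /allP /(_ _ H) /and4P []] := tP (ltn_ord u). Qed.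

Lemma T_deg (v : V) : deg T v = size (tn v).
Proof.
have /and3P [uq _ al] := tP (ltn_ord v); apply: card_list => //.
by apply/allP => w /(allP al) /andP [].
Qed.

Lemma T_step (u v : V) : T u v ->
  (pa u = v /\ dp u = (dp v).+1) \/ (pa v = u /\ dp v = (dp u).+1).
Proof.
move=> H; have /and3P [_ _ /allP /(_ _ H) /and4P [_ _ _]] := tP (ltn_ord u).
by case/orP => /andP [/andP [/eqP -> _] /eqP ->]; [left|right].

Qed.

Lemma T_conn_root : forall k (u : V), dp u = k -> connect T u (inord r).
Proof.
have [rN al] := andP ct2.
elim=> [|k IH] u du.
  move: (allvP al u) => /orP [/eqP ur|/and3P [_ _ h]]; last by move: h; rewrite du.
  by have -> : u = inord r by apply: val_inj; rewrite /= inordK.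
move: (allvP al u) => /orP [/eqP ur|/and3P [pN pt /eqP dpu]].
  by have -> : u = inord r by apply: val_inj; rewrite /= inordK.
apply: (@connect_trans _ _ (Ordinal pN)); first by apply: connect1.
by apply: IH; apply/eqP; rewrite /= -eqSS -dpu du.

Qed.

Lemma T_conn (u v : V) : connect T u v.
Proof.
apply: (@connect_trans _ _ (inord r)); first exact: (@T_conn_root _ u).
by rewrite (sym_connect_sym T_sym); exact: (@T_conn_root _ v).
Qed.

Lemma seq_max (f : V -> nat) (s : seq V) : s != [::] ->
  exists2 x, x \in s & forall y, y \in s -> f y <= f x.
Proof.
elim: s => [//|a s IH] _; case: s IH => [|b s] IH.
  by exists a; rewrite ?inE // => y; rewrite inE => /eqP ->.
have [x xs xm] := IH isT.
case: (leqP (f a) (f x)) => h.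
  exists x; first by rewrite inE xs orbT.
  by move=> y; rewrite inE => /orP [/eqP ->|]; [|apply: xm].
exists a; first by rewrite inE eqxx.
move=> y; rewrite inE => /orP [/eqP ->//|/xm H]; exact: (leq_trans H (ltnW h)).
Qed.

Lemma T_acyc c : ~ is_cycle T c.
Proof.
case=> uc sc cyc.
have cn : c != [::] by case: c sc {uc cyc}.
have [x xc xm] := @seq_max (fun v => dp v) c cn.

have := rot_index xc; set c' := rot _ c => ec'.
have uc' : uniq c' by rewrite rot_uniq.
have cyc' : cycle T c' by rewrite rot_cycle.
have sc' : 3 <= size c' by rewrite size_rot.
have mc' : forall y, y \in c' -> y \in c by move=> y; rewrite mem_rot.
move: uc' cyc' sc' mc'; rewrite ec'.
case: (drop _ _ ++ _) => [|y l] //; case/lastP: l => [|l z] //.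
move=> uc' cyc' _ mc'.
move: cyc'; rewrite /= rcons_path last_rcons => /and3P [Txy _ Tzx].

have yc : y \in c by apply: mc'; rewrite !inE eqxx orbT.
have zc : z \in c by apply: mc'; rewrite !inE mem_rcons inE eqxx !orbT.
have pxy : pa x = y.
  case: (T_step Txy) => [[] //|[_ h]]; have := xm _ yc; by rewrite h ltnn.
have pxz : pa x = z.
  case: (T_step Tzx) => [[_ h]|[] //]; have := xm _ zc; by rewrite h ltnn.
have yz : y = z by apply: val_inj; rewrite /= -pxy -pxz.
by move: uc'; rewrite /= mem_rcons inE yz eqxx /= andbF.
Qed.

Lemma hist_ok : hist E T.
Proof.
split.
  split; [exact: T_sub | exact: T_sym | exact: T_conn | exact: T_acyc].
by move=> v; rewrite T_deg; have /and3P [_ -> _] := tP (ltn_ord v).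
Qed.
End Tree.

Definition cotN (u w : nat) := (w \in nb u) && (w \notin tn u).
Definition chk_C (C : seq nat) := [&& uniq C, all (fun x => x < N) C,
  (match C with c :: C' => path cotN c C' && (size (tn c) == 1) | [::] => false end) &
  allv (fun u => all (fun w => (w \in tn u) || ((u \in C) == (w \in C))) (nb u))].
Definition Cset (C : seq nat) : {set V} := [set u : V | nat_of_ord u \in C].

Lemma cot_sym : chk_sym -> chk_t -> symmetric (cotree E T).
Proof. by move=> cs ct u v; rewrite /cotree (E_sym cs u) (T_sym ct u). Qed.

Lemma path_inord (a : nat) (l : seq nat) : a < N -> all (fun x => x < N) l ->
  path cotN a l -> path (cotree E T) (inord a) (map inord l).
Proof.
elim: l a => [//|b l IH] a ha /= /andP [hb al] /andP [ab pl].
apply/andP; split; last exact: IH.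
by rewrite /cotree /E /T !inordK.
Qed.

Lemma comp_eq C : chk_sym -> chk_t -> chk_C C -> forall v : V, nat_of_ord v \in C ->
  [set w | connect (cotree E T) v w] = Cset C.
Proof.
move=> cs ct /and4P [uC aC pC clC] v vC.
apply/setP => w; rewrite !inE; apply/idP/idP.
  move=> cvw.
  have cl : closed (cotree E T) (Cset C).
    move=> x y /andP [Exy nTxy]; rewrite /Cset !inE.
    have /allP /(_ _ Exy) := allvP clC x.
    by move: nTxy; rewrite /T => /negbTE -> /= /eqP.

  by have := closed_connect cl cvw; rewrite /Cset !inE vC => <-.

case: C uC aC pC clC vC => [//|c C'] uC /andP [hc aC'] /andP [pC _] _ vC wC.
have pth := path_inord hc aC' pC.
have mem : forall u : V, nat_of_ord u \in c :: C' -> u \in inord c :: map inord C'.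
  move=> u uc; rewrite -(inord_val u); apply: (map_f (fun x => inord x : V) uc).
have cw := path_connect pth (mem _ wC).
have cv := path_connect pth (mem _ vC).
rewrite (sym_connect_sym (cot_sym cs ct)) in cv.
exact: connect_trans cv cw.
Qed.

Variables C1 C2 : seq nat.
Definition chk_leaves := allv (fun u => (size (tn u) != 1) || (u \in C1) || (u \in C2)).
Definition chk_dist := head 0 C1 \notin C2.

Lemma oc_ok : chk_sym -> chk_t -> chk_C C1 -> chk_C C2 -> chk_leaves -> chk_dist ->
  perm_eq (oc E T) [:: size C1; size C2].
Proof.
move=> cs ct h1 h2 hl hd.
have OC : outer_cycles E T = [set Cset C1; Cset C2].
  apply/setP => X; rewrite !inE; apply/imsetP/orP.
    case=> v; rewrite /leaves inE T_deg // => /eqP v1 ->.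

    have := allvP hl v; rewrite v1 eqxx /= => /orP [vC|vC].
      by left; rewrite (comp_eq cs ct h1 vC).
    by right; rewrite (comp_eq cs ct h2 vC).
  have hh : forall C, chk_C C -> exists2 v, v \in leaves T & Cset C = [set w | connect (cotree E T) v w].
    move=> C hC; move: (hC) => /and4P [_ aC pC _].
    case: C hC aC pC => [//|c C'] hC /andP [hc _] /andP [_ /eqP sc].
    exists (inord c); first by rewrite /leaves inE T_deg // inordK // sc.
    by rewrite (comp_eq cs ct hC) // inordK // inE eqxx.
  by case=> /eqP ->; apply: hh.
have ne : Cset C1 != Cset C2.
  have [c [C' eC]] : exists c C', C1 = c :: C'.
    by move: h1; case: C1 => [|c C'] /and4P [] // _ _ _ _; exists c, C'.
  move: h1 hd; rewrite /chk_dist eC => /and4P [_ /andP [hc _] _ _] /= hd.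

  apply/negP => /eqP e; have : (inord c : V) \in Cset (c :: C') by rewrite inE inordK // inE eqxx.
  by rewrite e /Cset inE inordK // (negbTE hd).

have pe : perm_eq (enum [set Cset C1; Cset C2]) [:: Cset C1; Cset C2].
  apply: uniq_perm; first exact: enum_uniq.
    by rewrite /= inE ne.
  by move=> X; rewrite mem_enum !inE.
rewrite /oc OC; apply: perm_trans (perm_map _ pe) _.
move: h1 h2 => /and4P [u1 a1 _ _] /and4P [u2 a2 _ _].
by rewrite /= !card_list.
Qed.

Definition allchk (EL : seq (nat * nat)) (ord : seq nat) :=
  chk_sym && chk_irr && chk_deg && chk_g && all (fun x => x < N) ord &&
  allv (fun u => u \in ord) && srch ord [::] [::] && chk_EL EL && ~~ csrch EL [::] &&
  chk_t && chk_t2 && chk_C C1 && chk_C C2 && chk_leaves && chk_dist.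

Lemma main_gen EL ord : allchk EL ord ->
  exists (V : finType) (e t : rel V),
    [/\ snark e, hist e t & perm_eq (oc e t) [:: size C1; size C2]].
Proof.
rewrite /allchk.
move=> /andP [/andP [/andP [/andP [/andP [/andP [/andP [/andP [/andP [/andP [/andP [/andP [/andP [/andP [cs ci] cd] cg] al] cov] s] cEL] nc] ct] ct2] h1] h2] hl] hd].
exists V, E, T; split.
- split.
  + exact: simple_ok.
  + exact: cubic_ok.
  + apply: (cyc4_ok cs (girth_ok cg) al _ s) => u; exact: (allvP cov).
  + exact: girth_ok.
  + move=> [col hc]; have := col_sound cs cEL hc; by rewrite (negbTE nc).
- exact: hist_ok.
- exact: oc_ok.
Qed.
End Gen.

Definition g5_5_tbl := [:: [:: 1; 2; 3]; [:: 0; 6; 17]; [:: 0; 16; 14]; [:: 0; 4; 5]; [:: 3; 6; 7]; [:: 3; 17; 11]; [:: 4; 1; 11]; [:: 4; 8; 9]; [:: 7; 14; 13]; [:: 7; 10; 11]; [:: 9; 12; 13]; [:: 9; 5; 6]; [:: 10; 14; 15]; [:: 10; 16; 8]; [:: 12; 2; 8]; [:: 12; 16; 17]; [:: 15; 13; 2]; [:: 15; 1; 5]].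
Definition g5_5_ttbl := [:: [:: 1; 2; 3]; [:: 0]; [:: 0]; [:: 0; 4; 5]; [:: 3; 6; 7]; [:: 3]; [:: 4]; [:: 4; 8; 9]; [:: 7]; [:: 7; 10; 11]; [:: 9; 12; 13]; [:: 9]; [:: 10; 14; 15]; [:: 10]; [:: 12]; [:: 12; 16; 17]; [:: 15]; [:: 15]].
Definition g5_5_par := [:: 0; 0; 0; 0; 3; 3; 4; 4; 7; 7; 9; 9; 10; 10; 12; 12; 15; 15].
Definition g5_5_dep := [:: 0; 1; 1; 1; 2; 2; 3; 3; 4; 4; 5; 5; 6; 6; 7; 7; 8; 8].
Definition g5_5_C1 := [:: 6; 1; 17; 5; 11].
Definition g5_5_C2 := [:: 13; 16; 2; 14; 8].
Definition g5_5_EL := [:: (0, 1); (0, 2); (0, 3); (1, 6); (1, 17); (2, 16); (2, 14); (3, 4); (3, 5); (4, 6); (4, 7); (5, 17); (5, 11); (6, 11); (7, 8); (7, 9); (8, 14); (8, 13); (9, 10); (9, 11); (10, 12); (10, 13); (12, 14); (12, 15); (13, 16); (15, 16); (15, 17)].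
Definition g5_5_ord := [:: 0; 1; 2; 3; 6; 17; 16; 14; 4; 5; 11; 15; 13; 12; 8; 7; 9; 10].
Lemma g5_5_chk : allchk 17 g5_5_tbl g5_5_ttbl g5_5_par g5_5_dep 0 g5_5_C1 g5_5_C2 g5_5_EL g5_5_ord.
Proof. vm_compute. reflexivity. Qed.
Lemma g5_5_ok : exists (V : finType) (e t : rel V), [/\ snark e, hist e t & perm_eq (oc e t) [:: 5; 5]].
Proof. exact: (main_gen g5_5_chk). Qed.

Definition g5_6_tbl := [:: [:: 1; 2; 3]; [:: 0; 4; 5]; [:: 0; 6; 7]; [:: 0; 19; 16]; [:: 1; 14; 15]; [:: 1; 8; 9]; [:: 2; 12; 13]; [:: 2; 10; 11]; [:: 5; 16; 17]; [:: 5; 19; 12]; [:: 7; 18; 14]; [:: 7; 13; 15]; [:: 6; 16; 9]; [:: 6; 11; 14]; [:: 4; 10; 13]; [:: 4; 11; 18]; [:: 8; 3; 12]; [:: 8; 18; 19]; [:: 17; 15; 10]; [:: 17; 9; 3]].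
Definition g5_6_ttbl := [:: [:: 1; 2; 3]; [:: 0; 4; 5]; [:: 0; 6; 7]; [:: 0]; [:: 1; 14; 15]; [:: 1; 8; 9]; [:: 2; 12; 13]; [:: 2; 10; 11]; [:: 5; 16; 17]; [:: 5]; [:: 7]; [:: 7]; [:: 6]; [:: 6]; [:: 4]; [:: 4]; [:: 8]; [:: 8; 18; 19]; [:: 17]; [:: 17]].
Definition g5_6_par := [:: 0; 0; 0; 0; 1; 1; 2; 2; 5; 5; 7; 7; 6; 6; 4; 4; 8; 8; 17; 17].
Definition g5_6_dep := [:: 0; 1; 1; 1; 2; 2; 2; 2; 3; 3; 3; 3; 3; 3; 3; 3; 4; 4; 5; 5].
Definition g5_6_C1 := [:: 9; 19; 3; 16; 12].
Definition g5_6_C2 := [:: 13; 11; 15; 18; 10; 14].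
Definition g5_6_EL := [:: (0, 1); (0, 2); (0, 3); (1, 4); (1, 5); (2, 6); (2, 7); (3, 19); (3, 16); (4, 14); (4, 15); (5, 8); (5, 9); (6, 12); (6, 13); (7, 10); (7, 11); (8, 16); (8, 17); (9, 19); (9, 12); (10, 18); (10, 14); (11, 13); (11, 15); (12, 16); (13, 14); (15, 18); (17, 18); (17, 19)].
Definition g5_6_ord := [:: 0; 1; 2; 3; 4; 5; 6; 7; 19; 16; 14; 15; 8; 9; 12; 13; 10; 11; 17; 18].
Lemma g5_6_chk : allchk 19 g5_6_tbl g5_6_ttbl g5_6_par g5_6_dep 0 g5_6_C1 g5_6_C2 g5_6_EL g5_6_ord.
Proof. vm_compute. reflexivity. Qed.
Lemma g5_6_ok : exists (V : finType) (e t : rel V), [/\ snark e, hist e t & perm_eq (oc e t) [:: 5; 6]].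
Proof. exact: (main_gen g5_6_chk). Qed.

Definition g5_7_tbl := [:: [:: 1; 2; 3]; [:: 0; 12; 13]; [:: 0; 4; 5]; [:: 0; 8; 9]; [:: 2; 6; 7]; [:: 2; 10; 17]; [:: 4; 16; 17]; [:: 4; 10; 11]; [:: 3; 20; 18]; [:: 3; 14; 15]; [:: 7; 5; 19]; [:: 7; 17; 12]; [:: 1; 11; 21]; [:: 1; 18; 15]; [:: 9; 18; 19]; [:: 9; 13; 20]; [:: 6; 20; 21]; [:: 6; 5; 11]; [:: 14; 13; 8]; [:: 14; 21; 10]; [:: 16; 15; 8]; [:: 16; 12; 19]].
Definition g5_7_ttbl := [:: [:: 1; 2; 3]; [:: 0; 12; 13]; [:: 0; 4; 5]; [:: 0; 8; 9]; [:: 2; 6; 7]; [:: 2]; [:: 4; 16; 17]; [:: 4; 10; 11]; [:: 3]; [:: 3; 14; 15]; [:: 7]; [:: 7]; [:: 1]; [:: 1]; [:: 9; 18; 19]; [:: 9]; [:: 6; 20; 21]; [:: 6]; [:: 14]; [:: 14]; [:: 16]; [:: 16]].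
Definition g5_7_par := [:: 0; 0; 0; 0; 2; 2; 4; 4; 3; 3; 7; 7; 1; 1; 9; 9; 6; 6; 14; 14; 16; 16].
Definition g5_7_dep := [:: 0; 1; 1; 1; 2; 2; 3; 3; 2; 2; 4; 4; 2; 2; 3; 3; 4; 4; 4; 4; 5; 5].
Definition g5_7_C1 := [:: 18; 13; 15; 20; 8].
Definition g5_7_C2 := [:: 10; 5; 17; 11; 12; 21; 19].
Definition g5_7_EL := [:: (0, 1); (0, 2); (0, 3); (1, 12); (1, 13); (2, 4); (2, 5); (3, 8); (3, 9); (4, 6); (4, 7); (5, 10); (5, 17); (6, 16); (6, 17); (7, 10); (7, 11); (8, 20); (8, 18); (9, 14); (9, 15); (10, 19); (11, 17); (11, 12); (12, 21); (13, 18); (13, 15); (14, 18); (14, 19); (15, 20); (16, 20); (16, 21); (19, 21)].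
Definition g5_7_ord := [:: 0; 1; 2; 3; 12; 13; 4; 5; 8; 9; 11; 21; 18; 15; 6; 7; 10; 17; 20; 14; 16; 19].
Lemma g5_7_chk : allchk 21 g5_7_tbl g5_7_ttbl g5_7_par g5_7_dep 0 g5_7_C1 g5_7_C2 g5_7_EL g5_7_ord.
Proof. vm_compute. reflexivity. Qed.
Lemma g5_7_ok : exists (V : finType) (e t : rel V), [/\ snark e, hist e t & perm_eq (oc e t) [:: 5; 7]].
Proof. exact: (main_gen g5_7_chk). Qed.

Definition g5_8_tbl := [:: [:: 1; 2; 3]; [:: 0; 6; 7]; [:: 0; 8; 9]; [:: 0; 4; 5]; [:: 3; 20; 21]; [:: 3; 16; 7]; [:: 1; 10; 11]; [:: 1; 5; 21]; [:: 2; 18; 17]; [:: 2; 14; 15]; [:: 6; 19; 22]; [:: 6; 12; 13]; [:: 11; 18; 19]; [:: 11; 22; 23]; [:: 9; 18; 20]; [:: 9; 16; 17]; [:: 15; 22; 5]; [:: 15; 8; 20]; [:: 12; 14; 8]; [:: 12; 23; 10]; [:: 4; 17; 14]; [:: 4; 7; 23]; [:: 13; 16; 10]; [:: 13; 21; 19]].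
Definition g5_8_ttbl := [:: [:: 1; 2; 3]; [:: 0; 6; 7]; [:: 0; 8; 9]; [:: 0; 4; 5]; [:: 3; 20; 21]; [:: 3]; [:: 1; 10; 11]; [:: 1]; [:: 2]; [:: 2; 14; 15]; [:: 6]; [:: 6; 12; 13]; [:: 11; 18; 19]; [:: 11; 22; 23]; [:: 9]; [:: 9; 16; 17]; [:: 15]; [:: 15]; [:: 12]; [:: 12]; [:: 4]; [:: 4]; [:: 13]; [:: 13]].
Definition g5_8_par := [:: 0; 0; 0; 0; 3; 3; 1; 1; 2; 2; 6; 6; 11; 11; 9; 9; 15; 15; 12; 12; 4; 4; 13; 13].
Definition g5_8_dep := [:: 0; 1; 1; 1; 2; 2; 2; 2; 2; 2; 3; 3; 4; 4; 3; 3; 4; 4; 5; 5; 3; 3; 5; 5].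
Definition g5_8_C1 := [:: 14; 18; 8; 17; 20].
Definition g5_8_C2 := [:: 22; 16; 5; 7; 21; 23; 19; 10].
Definition g5_8_EL := [:: (0, 1); (0, 2); (0, 3); (1, 6); (1, 7); (2, 8); (2, 9); (3, 4); (3, 5); (4, 20); (4, 21); (5, 16); (5, 7); (6, 10); (6, 11); (7, 21); (8, 18); (8, 17); (9, 14); (9, 15); (10, 19); (10, 22); (11, 12); (11, 13); (12, 18); (12, 19); (13, 22); (13, 23); (14, 18); (14, 20); (15, 16); (15, 17); (16, 22); (17, 20); (19, 23); (21, 23)].
Definition g5_8_ord := [:: 0; 1; 2; 3; 6; 7; 8; 9; 4; 5; 10; 11; 21; 18; 17; 14; 15; 20; 16; 19; 22; 12; 13; 23].
Lemma g5_8_chk : allchk 23 g5_8_tbl g5_8_ttbl g5_8_par g5_8_dep 0 g5_8_C1 g5_8_C2 g5_8_EL g5_8_ord.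
Proof. vm_compute. reflexivity. Qed.
Lemma g5_8_ok : exists (V : finType) (e t : rel V), [/\ snark e, hist e t & perm_eq (oc e t) [:: 5; 8]].
Proof. exact: (main_gen g5_8_chk). Qed.

Definition g6_6_tbl := [:: [:: 1; 2; 3]; [:: 0; 18; 19]; [:: 0; 4; 5]; [:: 0; 8; 9]; [:: 2; 10; 11]; [:: 2; 6; 7]; [:: 5; 15; 8]; [:: 5; 13; 17]; [:: 3; 17; 6]; [:: 3; 12; 13]; [:: 4; 16; 17]; [:: 4; 14; 15]; [:: 9; 20; 21]; [:: 9; 15; 7]; [:: 11; 19; 21]; [:: 11; 6; 13]; [:: 10; 18; 20]; [:: 10; 7; 8]; [:: 1; 16; 21]; [:: 1; 20; 14]; [:: 12; 16; 19]; [:: 12; 14; 18]].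
Definition g6_6_ttbl := [:: [:: 1; 2; 3]; [:: 0; 18; 19]; [:: 0; 4; 5]; [:: 0; 8; 9]; [:: 2; 10; 11]; [:: 2; 6; 7]; [:: 5]; [:: 5]; [:: 3]; [:: 3; 12; 13]; [:: 4; 16; 17]; [:: 4; 14; 15]; [:: 9; 20; 21]; [:: 9]; [:: 11]; [:: 11]; [:: 10]; [:: 10]; [:: 1]; [:: 1]; [:: 12]; [:: 12]].
Definition g6_6_par := [:: 0; 0; 0; 0; 2; 2; 5; 5; 3; 3; 4; 4; 9; 9; 11; 11; 10; 10; 1; 1; 12; 12].
Definition g6_6_dep := [:: 0; 1; 1; 1; 2; 2; 3; 3; 2; 2; 3; 3; 3; 3; 4; 4; 4; 4; 2; 2; 4; 4].
Definition g6_6_C1 := [:: 18; 16; 20; 19; 14; 21].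
Definition g6_6_C2 := [:: 6; 15; 13; 7; 17; 8].
Definition g6_6_EL := [:: (0, 1); (0, 2); (0, 3); (1, 18); (1, 19); (2, 4); (2, 5); (3, 8); (3, 9); (4, 10); (4, 11); (5, 6); (5, 7); (6, 15); (6, 8); (7, 13); (7, 17); (8, 17); (9, 12); (9, 13); (10, 16); (10, 17); (11, 14); (11, 15); (12, 20); (12, 21); (13, 15); (14, 19); (14, 21); (16, 18); (16, 20); (18, 21); (19, 20)].
Definition g6_6_ord := [:: 0; 1; 2; 3; 18; 19; 4; 5; 8; 9; 16; 21; 20; 14; 10; 11; 6; 7; 17; 12; 13; 15].
Lemma g6_6_chk : allchk 21 g6_6_tbl g6_6_ttbl g6_6_par g6_6_dep 0 g6_6_C1 g6_6_C2 g6_6_EL g6_6_ord.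
Proof. vm_compute. reflexivity. Qed.
Lemma g6_6_ok : exists (V : finType) (e t : rel V), [/\ snark e, hist e t & perm_eq (oc e t) [:: 6; 6]].
Proof. exact: (main_gen g6_6_chk). Qed.

Definition g6_7_tbl := [:: [:: 1; 2; 3]; [:: 0; 10; 11]; [:: 0; 22; 23]; [:: 0; 4; 5]; [:: 3; 6; 7]; [:: 3; 8; 9]; [:: 4; 12; 10]; [:: 4; 15; 11]; [:: 5; 18; 19]; [:: 5; 12; 13]; [:: 1; 6; 20]; [:: 1; 7; 12]; [:: 9; 6; 11]; [:: 9; 14; 15]; [:: 13; 16; 17]; [:: 13; 20; 7]; [:: 14; 20; 21]; [:: 14; 23; 18]; [:: 8; 17; 22]; [:: 8; 23; 21]; [:: 16; 10; 15]; [:: 16; 22; 19]; [:: 2; 18; 21]; [:: 2; 19; 17]].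
Definition g6_7_ttbl := [:: [:: 1; 2; 3]; [:: 0; 10; 11]; [:: 0; 22; 23]; [:: 0; 4; 5]; [:: 3; 6; 7]; [:: 3; 8; 9]; [:: 4]; [:: 4]; [:: 5; 18; 19]; [:: 5; 12; 13]; [:: 1]; [:: 1]; [:: 9]; [:: 9; 14; 15]; [:: 13; 16; 17]; [:: 13]; [:: 14; 20; 21]; [:: 14]; [:: 8]; [:: 8]; [:: 16]; [:: 16]; [:: 2]; [:: 2]].
Definition g6_7_par := [:: 0; 0; 0; 0; 3; 3; 4; 4; 5; 5; 1; 1; 9; 9; 13; 13; 14; 14; 8; 8; 16; 16; 2; 2].
Definition g6_7_dep := [:: 0; 1; 1; 1; 2; 2; 3; 3; 3; 3; 2; 2; 4; 4; 5; 5; 6; 6; 4; 4; 7; 7; 2; 2].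
Definition g6_7_C1 := [:: 19; 23; 17; 18; 22; 21].
Definition g6_7_C2 := [:: 12; 6; 10; 20; 15; 7; 11].
Definition g6_7_EL := [:: (0, 1); (0, 2); (0, 3); (1, 10); (1, 11); (2, 22); (2, 23); (3, 4); (3, 5); (4, 6); (4, 7); (5, 8); (5, 9); (6, 12); (6, 10); (7, 15); (7, 11); (8, 18); (8, 19); (9, 12); (9, 13); (10, 20); (11, 12); (13, 14); (13, 15); (14, 16); (14, 17); (15, 20); (16, 20); (16, 21); (17, 23); (17, 18); (18, 22); (19, 23); (19, 21); (21, 22)].
Definition g6_7_ord := [:: 0; 1; 2; 3; 10; 11; 22; 23; 4; 5; 6; 20; 7; 12; 18; 21; 19; 17; 8; 9; 16; 15; 14; 13].
Lemma g6_7_chk : allchk 23 g6_7_tbl g6_7_ttbl g6_7_par g6_7_dep 0 g6_7_C1 g6_7_C2 g6_7_EL g6_7_ord.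
Proof. vm_compute. reflexivity. Qed.
Lemma g6_7_ok : exists (V : finType) (e t : rel V), [/\ snark e, hist e t & perm_eq (oc e t) [:: 6; 7]].
Proof. exact: (main_gen g6_7_chk). Qed.

Definition g6_8_tbl := [:: [:: 1; 2; 3]; [:: 0; 22; 15]; [:: 0; 4; 5]; [:: 0; 16; 17]; [:: 2; 6; 7]; [:: 2; 14; 15]; [:: 4; 12; 13]; [:: 4; 8; 9]; [:: 7; 18; 19]; [:: 7; 10; 11]; [:: 9; 20; 21]; [:: 9; 19; 25]; [:: 6; 21; 23]; [:: 6; 17; 24]; [:: 5; 22; 23]; [:: 5; 1; 16]; [:: 3; 20; 15]; [:: 3; 13; 21]; [:: 8; 24; 25]; [:: 8; 20; 11]; [:: 10; 16; 19]; [:: 10; 17; 12]; [:: 14; 25; 1]; [:: 14; 12; 24]; [:: 18; 23; 13]; [:: 18; 11; 22]].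
Definition g6_8_ttbl := [:: [:: 1; 2; 3]; [:: 0]; [:: 0; 4; 5]; [:: 0; 16; 17]; [:: 2; 6; 7]; [:: 2; 14; 15]; [:: 4; 12; 13]; [:: 4; 8; 9]; [:: 7; 18; 19]; [:: 7; 10; 11]; [:: 9; 20; 21]; [:: 9]; [:: 6]; [:: 6]; [:: 5; 22; 23]; [:: 5]; [:: 3]; [:: 3]; [:: 8; 24; 25]; [:: 8]; [:: 10]; [:: 10]; [:: 14]; [:: 14]; [:: 18]; [:: 18]].
Definition g6_8_par := [:: 0; 0; 0; 0; 2; 2; 4; 4; 7; 7; 9; 9; 6; 6; 5; 5; 3; 3; 8; 8; 10; 10; 14; 14; 18; 18].
Definition g6_8_dep := [:: 0; 1; 1; 1; 2; 2; 3; 3; 4; 4; 5; 5; 4; 4; 3; 3; 2; 2; 5; 5; 6; 6; 4; 4; 6; 6].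
Definition g6_8_C1 := [:: 13; 17; 21; 12; 23; 24].
Definition g6_8_C2 := [:: 16; 20; 19; 11; 25; 22; 1; 15].
Definition g6_8_EL := [:: (0, 1); (0, 2); (0, 3); (1, 22); (1, 15); (2, 4); (2, 5); (3, 16); (3, 17); (4, 6); (4, 7); (5, 14); (5, 15); (6, 12); (6, 13); (7, 8); (7, 9); (8, 18); (8, 19); (9, 10); (9, 11); (10, 20); (10, 21); (11, 19); (11, 25); (12, 21); (12, 23); (13, 17); (13, 24); (14, 22); (14, 23); (15, 16); (16, 20); (17, 21); (18, 24); (18, 25); (19, 20); (22, 25); (23, 24)].
Definition g6_8_ord := [:: 0; 1; 2; 3; 22; 15; 4; 5; 16; 17; 14; 25; 6; 7; 20; 13; 21; 23; 18; 11; 12; 8; 9; 10; 19; 24].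
Lemma g6_8_chk : allchk 25 g6_8_tbl g6_8_ttbl g6_8_par g6_8_dep 0 g6_8_C1 g6_8_C2 g6_8_EL g6_8_ord.
Proof. vm_compute. reflexivity. Qed.
Lemma g6_8_ok : exists (V : finType) (e t : rel V), [/\ snark e, hist e t & perm_eq (oc e t) [:: 6; 8]].
Proof. exact: (main_gen g6_8_chk). Qed.

Definition g7_7_tbl := [:: [:: 1; 2; 3]; [:: 0; 6; 7]; [:: 0; 14; 15]; [:: 0; 4; 5]; [:: 3; 8; 9]; [:: 3; 12; 13]; [:: 1; 12; 24]; [:: 1; 10; 11]; [:: 4; 12; 10]; [:: 4; 18; 19]; [:: 7; 13; 8]; [:: 7; 22; 17]; [:: 5; 8; 6]; [:: 5; 20; 10]; [:: 2; 22; 23]; [:: 2; 16; 17]; [:: 15; 22; 21]; [:: 15; 23; 11]; [:: 9; 20; 21]; [:: 9; 24; 25]; [:: 18; 24; 13]; [:: 18; 16; 25]; [:: 14; 11; 16]; [:: 14; 25; 17]; [:: 19; 6; 20]; [:: 19; 21; 23]].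
Definition g7_7_ttbl := [:: [:: 1; 2; 3]; [:: 0; 6; 7]; [:: 0; 14; 15]; [:: 0; 4; 5]; [:: 3; 8; 9]; [:: 3; 12; 13]; [:: 1]; [:: 1; 10; 11]; [:: 4]; [:: 4; 18; 19]; [:: 7]; [:: 7]; [:: 5]; [:: 5]; [:: 2; 22; 23]; [:: 2; 16; 17]; [:: 15]; [:: 15]; [:: 9; 20; 21]; [:: 9; 24; 25]; [:: 18]; [:: 18]; [:: 14]; [:: 14]; [:: 19]; [:: 19]].
Definition g7_7_par := [:: 0; 0; 0; 0; 3; 3; 1; 1; 4; 4; 7; 7; 5; 5; 2; 2; 15; 15; 9; 9; 18; 18; 14; 14; 19; 19].
Definition g7_7_dep := [:: 0; 1; 1; 1; 2; 2; 2; 2; 3; 3; 3; 3; 3; 3; 2; 2; 3; 3; 4; 4; 5; 5; 3; 3; 5; 5].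
Definition g7_7_C1 := [:: 8; 12; 6; 24; 20; 13; 10].
Definition g7_7_C2 := [:: 11; 22; 16; 21; 25; 23; 17].
Definition g7_7_EL := [:: (0, 1); (0, 2); (0, 3); (1, 6); (1, 7); (2, 14); (2, 15); (3, 4); (3, 5); (4, 8); (4, 9); (5, 12); (5, 13); (6, 12); (6, 24); (7, 10); (7, 11); (8, 12); (8, 10); (9, 18); (9, 19); (10, 13); (11, 22); (11, 17); (13, 20); (14, 22); (14, 23); (15, 16); (15, 17); (16, 22); (16, 21); (17, 23); (18, 20); (18, 21); (19, 24); (19, 25); (20, 24); (21, 25); (23, 25)].
Definition g7_7_ord := [:: 0; 1; 2; 3; 6; 7; 14; 15; 4; 5; 12; 24; 10; 11; 22; 23; 16; 17; 8; 9; 13; 19; 20; 25; 21; 18].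
Lemma g7_7_chk : allchk 25 g7_7_tbl g7_7_ttbl g7_7_par g7_7_dep 0 g7_7_C1 g7_7_C2 g7_7_EL g7_7_ord.
Proof. vm_compute. reflexivity. Qed.
Lemma g7_7_ok : exists (V : finType) (e t : rel V), [/\ snark e, hist e t & perm_eq (oc e t) [:: 7; 7]].
Proof. exact: (main_gen g7_7_chk). Qed.

Definition g7_8_tbl := [:: [:: 1; 2; 3]; [:: 0; 4; 5]; [:: 0; 6; 7]; [:: 0; 25; 14]; [:: 1; 8; 9]; [:: 1; 16; 17]; [:: 2; 24; 25]; [:: 2; 14; 15]; [:: 4; 12; 13]; [:: 4; 10; 11]; [:: 9; 20; 21]; [:: 9; 13; 26]; [:: 8; 27; 23]; [:: 8; 11; 20]; [:: 7; 3; 26]; [:: 7; 20; 25]; [:: 5; 22; 23]; [:: 5; 18; 19]; [:: 17; 24; 23]; [:: 17; 27; 22]; [:: 10; 13; 15]; [:: 10; 26; 27]; [:: 16; 19; 24]; [:: 16; 18; 12]; [:: 6; 22; 18]; [:: 6; 15; 3]; [:: 21; 14; 11]; [:: 21; 12; 19]].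
Definition g7_8_ttbl := [:: [:: 1; 2; 3]; [:: 0; 4; 5]; [:: 0; 6; 7]; [:: 0]; [:: 1; 8; 9]; [:: 1; 16; 17]; [:: 2; 24; 25]; [:: 2; 14; 15]; [:: 4; 12; 13]; [:: 4; 10; 11]; [:: 9; 20; 21]; [:: 9]; [:: 8]; [:: 8]; [:: 7]; [:: 7]; [:: 5; 22; 23]; [:: 5; 18; 19]; [:: 17]; [:: 17]; [:: 10]; [:: 10; 26; 27]; [:: 16]; [:: 16]; [:: 6]; [:: 6]; [:: 21]; [:: 21]].
Definition g7_8_par := [:: 0; 0; 0; 0; 1; 1; 2; 2; 4; 4; 9; 9; 8; 8; 7; 7; 5; 5; 17; 17; 10; 10; 16; 16; 6; 6; 21; 21].
Definition g7_8_dep := [:: 0; 1; 1; 1; 2; 2; 2; 2; 3; 3; 4; 4; 4; 4; 3; 3; 3; 3; 4; 4; 5; 5; 4; 4; 3; 3; 6; 6].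
Definition g7_8_C1 := [:: 12; 27; 19; 22; 24; 18; 23].
Definition g7_8_C2 := [:: 11; 13; 20; 15; 25; 3; 14; 26].
Definition g7_8_EL := [:: (0, 1); (0, 2); (0, 3); (1, 4); (1, 5); (2, 6); (2, 7); (3, 25); (3, 14); (4, 8); (4, 9); (5, 16); (5, 17); (6, 24); (6, 25); (7, 14); (7, 15); (8, 12); (8, 13); (9, 10); (9, 11); (10, 20); (10, 21); (11, 13); (11, 26); (12, 27); (12, 23); (13, 20); (14, 26); (15, 20); (15, 25); (16, 22); (16, 23); (17, 18); (17, 19); (18, 24); (18, 23); (19, 27); (19, 22); (21, 26); (21, 27); (22, 24)].
Definition g7_8_ord := [:: 0; 1; 2; 3; 4; 5; 6; 7; 25; 14; 8; 9; 16; 17; 24; 15; 26; 12; 13; 10; 11; 22; 23; 18; 19; 20; 21; 27].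
Lemma g7_8_chk : allchk 27 g7_8_tbl g7_8_ttbl g7_8_par g7_8_dep 0 g7_8_C1 g7_8_C2 g7_8_EL g7_8_ord.
Proof. vm_compute. reflexivity. Qed.
Lemma g7_8_ok : exists (V : finType) (e t : rel V), [/\ snark e, hist e t & perm_eq (oc e t) [:: 7; 8]].
Proof. exact: (main_gen g7_8_chk). Qed.

Definition g8_8_tbl := [:: [:: 1; 2; 3]; [:: 0; 4; 5]; [:: 0; 6; 7]; [:: 0; 10; 11]; [:: 1; 17; 24]; [:: 1; 8; 9]; [:: 2; 21; 11]; [:: 2; 12; 13]; [:: 5; 16; 17]; [:: 5; 14; 15]; [:: 3; 20; 21]; [:: 3; 6; 24]; [:: 7; 26; 27]; [:: 7; 18; 19]; [:: 9; 28; 25]; [:: 9; 17; 29]; [:: 8; 28; 29]; [:: 8; 4; 15]; [:: 13; 27; 23]; [:: 13; 24; 25]; [:: 10; 22; 23]; [:: 10; 29; 6]; [:: 20; 25; 27]; [:: 20; 18; 26]; [:: 19; 11; 4]; [:: 19; 22; 14]; [:: 12; 23; 28]; [:: 12; 22; 18]; [:: 16; 26; 14]; [:: 16; 15; 21]].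
Definition g8_8_ttbl := [:: [:: 1; 2; 3]; [:: 0; 4; 5]; [:: 0; 6; 7]; [:: 0; 10; 11]; [:: 1]; [:: 1; 8; 9]; [:: 2]; [:: 2; 12; 13]; [:: 5; 16; 17]; [:: 5; 14; 15]; [:: 3; 20; 21]; [:: 3]; [:: 7; 26; 27]; [:: 7; 18; 19]; [:: 9]; [:: 9]; [:: 8; 28; 29]; [:: 8]; [:: 13]; [:: 13; 24; 25]; [:: 10; 22; 23]; [:: 10]; [:: 20]; [:: 20]; [:: 19]; [:: 19]; [:: 12]; [:: 12]; [:: 16]; [:: 16]].
Definition g8_8_par := [:: 0; 0; 0; 0; 1; 1; 2; 2; 5; 5; 3; 3; 7; 7; 9; 9; 8; 8; 13; 13; 10; 10; 20; 20; 19; 19; 12; 12; 16; 16].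
Definition g8_8_dep := [:: 0; 1; 1; 1; 2; 2; 2; 2; 3; 3; 2; 2; 3; 3; 4; 4; 4; 4; 4; 4; 3; 3; 4; 4; 5; 5; 4; 4; 5; 5].
Definition g8_8_C1 := [:: 25; 22; 27; 18; 23; 26; 28; 14].
Definition g8_8_C2 := [:: 4; 17; 15; 29; 21; 6; 11; 24].
Definition g8_8_EL := [:: (0, 1); (0, 2); (0, 3); (1, 4); (1, 5); (2, 6); (2, 7); (3, 10); (3, 11); (4, 17); (4, 24); (5, 8); (5, 9); (6, 21); (6, 11); (7, 12); (7, 13); (8, 16); (8, 17); (9, 14); (9, 15); (10, 20); (10, 21); (11, 24); (12, 26); (12, 27); (13, 18); (13, 19); (14, 28); (14, 25); (15, 17); (15, 29); (16, 28); (16, 29); (18, 27); (18, 23); (19, 24); (19, 25); (20, 22); (20, 23); (21, 29); (22, 25); (22, 27); (23, 26); (26, 28)].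
Definition g8_8_ord := [:: 0; 1; 2; 3; 4; 5; 6; 7; 10; 11; 17; 24; 8; 9; 21; 12; 13; 20; 15; 19; 16; 14; 29; 26; 27; 18; 22; 23; 25; 28].
Lemma g8_8_chk : allchk 29 g8_8_tbl g8_8_ttbl g8_8_par g8_8_dep 0 g8_8_C1 g8_8_C2 g8_8_EL g8_8_ord.
Proof. vm_compute. reflexivity. Qed.
Lemma g8_8_ok : exists (V : finType) (e t : rel V), [/\ snark e, hist e t & perm_eq (oc e t) [:: 8; 8]].
Proof. exact: (main_gen g8_8_chk). Qed.


Lemma swap_ok (a b : nat) :
  (exists (V : finType) (e t : rel V), [/\ snark e, hist e t & perm_eq (oc e t) [:: b; a]]) ->
  exists (V : finType) (e t : rel V), [/\ snark e, hist e t & perm_eq (oc e t) [:: a; b]].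
Proof.
case=> V [e [t [s h p]]]; exists V, e, t; split => //.
by rewrite (perm_trans p) // -cat1s perm_catC.
Qed.

Unset Implicit Arguments. Set Strict Implicit. Set Printing Implicit Defensive.

Theorem lemma4 (x y : nat) :
  x \in [:: 5; 6; 7; 8] -> y \in [:: 5; 6; 7; 8] ->
  exists (V : finType) (e t : rel V),
    [/\ snark e, hist e t & perm_eq (oc e t) [:: x; y]].
Proof.
rewrite !inE => /or4P [] /eqP -> /or4P [] /eqP ->.
- exact: g5_5_ok.
- exact: g5_6_ok.
- exact: g5_7_ok.
- exact: g5_8_ok.
- exact: (swap_ok g5_6_ok).
- exact: g6_6_ok.
- exact: g6_7_ok.
- exact: g6_8_ok.
- exact: (swap_ok g5_7_ok).
- exact: (swap_ok g6_7_ok).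
- exact: g7_7_ok.
- exact: g7_8_ok.
- exact: (swap_ok g5_8_ok).
- exact: (swap_ok g6_8_ok).
- exact: (swap_ok g7_8_ok).
- exact: g8_8_ok.
Qed.
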